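(* Let $\mathbf{a}=\{a_i\}_{i\ge1}$ and $\mathbf{b}=\{b_i\}_{i\ge1}$ be elements of $\mathbf{C}$ and let $K,L\in(0,\infty)$. If the metric spaces $(\Upsilon, K\cdot R[\mathbf{a}])$ and $(\Upsilon, L\cdot R[\mathbf{b}])$ are isometric, then $\mathbf{a}=\mathbf{b}$.
   Context: $\mathbf{C}=\prod_{i=1}^\infty[2^{-2i},2^{-2i+1}]$, a set of sequences $\mathbf{a}=\{a_i\}_{i\ge1}$; for $\mathbf{a}\in\mathbf{C}$ one sets additionally $a_0=1$. $\Upsilon=\{(0,0)\}\cup\big((0,1]\times\mathbb{Z}_{\ge0}\big)$, and an element $(s,i)$ is written $s_i$ (so $0_0=(0,0)$). For $\mathbf{a}\in\mathbf{C}$, the metric $R[\mathbf{a}]$ on $\Upsilon$ is $R[\mathbf{a}](s_i,t_j)=a_i|s-t|$ if $i=j$ and $R[\mathbf{a}](s_i,t_j)=a_is+a_jt$ if $i\ne j$ (a compact metric tree with edges of lengths $a_i$ glued at $0_0$). *)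

(* Defs.v *)
From Stdlib Require Import Reals Lra Lia.
Open Scope R_scope.

(* Points of Upsilon: s_i = (s,i) with (s,i) = (0,0) or s in (0,1]. *)
Definition in_Upsilon (p : R * nat) : Prop :=
  (fst p = 0 /\ snd p = 0%nat) \/ (0 < fst p <= 1).

Definition Upsilon : Type := { p : R * nat | in_Upsilon p }.

(* A sequence a = {a_i}_{i>=1} is modelled by a : nat -> R; the value a 0
   is irrelevant and replaced by the convention a_0 = 1 (see ext0). *)
Definition in_C (a : nat -> R) : Prop :=
  forall i : nat, (1 <= i)%nat ->
    (/ 2) ^ (2 * i) <= a i <= (/ 2) ^ (2 * i - 1).

Definition ext0 (a : nat -> R) (i : nat) : R :=
  match i with O => 1 | _ => a i end.

Definition Rmet (a : nat -> R) (x y : Upsilon) : R :=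
  let s := fst (proj1_sig x) in let i := snd (proj1_sig x) in
  let t := fst (proj1_sig y) in let j := snd (proj1_sig y) in
  if Nat.eq_dec i j then ext0 a i * Rabs (s - t)
  else ext0 a i * s + ext0 a j * t.

Definition isometric_scaled (K : R) (d1 : Upsilon -> Upsilon -> R)
    (L : R) (d2 : Upsilon -> Upsilon -> R) : Prop :=
  exists (f : Upsilon -> Upsilon) (g : Upsilon -> Upsilon),
    (forall x, g (f x) = x) /\ (forall y, f (g y) = y) /\
    (forall x y, L * d2 (f x) (f y) = K * d1 x y).

(* Main.v *)
Require Import Defs.
From Stdlib Require Import Reals Lra Lia.
Open Scope R_scope.

Lemma half_pow_bounds n : 0 < (/2)^n <= 1.
Proof.
  induction n as [|n IH]; simpl; lra.
Qed.

Lemma half_pow_lt m k : (/2)^(m + S k) < (/2)^m.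
Proof.
  rewrite pow_add. destruct (half_pow_bounds m). destruct (half_pow_bounds k).
  simpl. nra.
Qed.

Lemma half_pow_lt' m n : (m < n)%nat -> (/2)^n < (/2)^m.
Proof.
  intros H. replace n with (m + S (n - S m))%nat by lia. apply half_pow_lt.
Qed.

Lemma inC_pos a i : in_C a -> 0 < ext0 a i <= 1.
Proof.
  intros Ha. destruct i as [|i]; simpl. lra.
  destruct (Ha (S i)) as [H1 H2]; [lia|].
  destruct (half_pow_bounds (2 * S i)). destruct (half_pow_bounds (2 * S i - 1)). lra.
Qed.

Lemma inC_half a i : in_C a -> (1 <= i)%nat -> a i <= /2.
Proof.
  intros Ha Hi. destruct (Ha i Hi) as [H1 H2].
  destruct (Nat.eq_dec (2*i-1) 1) as [E|E].
  - rewrite E in H2. simpl in H2. lra.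
  - assert (1 < 2*i-1)%nat by lia. pose proof (half_pow_lt' _ _ H).
    rewrite pow_1 in H0. lra.
Qed.

Lemma inC_inj a b i j : in_C a -> in_C b -> (1 <= i)%nat -> (1 <= j)%nat ->
  a i = b j -> i = j.
Proof.
  intros Ha Hb Hi Hj E. destruct (Ha i Hi). destruct (Hb j Hj).
  destruct (Nat.lt_trichotomy i j) as [Hl|[Hl|Hl]]; auto.
  - assert (Q: (2*i < 2*j-1)%nat) by lia. pose proof (half_pow_lt' _ _ Q). lra.
  - assert (Q: (2*j < 2*i-1)%nat) by lia. pose proof (half_pow_lt' _ _ Q). lra.
Qed.

Definition sx (x : Upsilon) : R := fst (proj1_sig x).
Definition ix (x : Upsilon) : nat := snd (proj1_sig x).
Definition rr (a : nat -> R) (x : Upsilon) : R := ext0 a (ix x) * sx x.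

Lemma sx_bounds x : 0 <= sx x <= 1 /\ (sx x = 0 -> ix x = 0%nat).
Proof.
  destruct x as [[s i] [[H1 H2]|H]]; unfold sx, ix; simpl in *; split; try lra; auto.
  all: intros; lra.
Qed.

Lemma rr_bounds a x : in_C a -> 0 <= rr a x <= 1.
Proof.
  intros Ha. unfold rr. destruct (inC_pos a (ix x) Ha). destruct (sx_bounds x) as [[] _].
  split; nra.
Qed.

Lemma rr_pos a x : in_C a -> 0 < sx x -> 0 < rr a x.
Proof.
  intros Ha H. unfold rr. destruct (inC_pos a (ix x) Ha). nra.
Qed.

Lemma dist_same a x y : in_C a -> ix x = ix y -> Rmet a x y = Rabs (rr a x - rr a y).
Proof.
  intros Ha E. unfold Rmet, rr. fold (sx x) (sx y) (ix x) (ix y).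
  destruct (Nat.eq_dec (ix x) (ix y)); [|contradiction].
  rewrite <- E. rewrite <- Rmult_minus_distr_l, Rabs_mult.
  destruct (inC_pos a (ix x) Ha). rewrite (Rabs_pos_eq (ext0 a (ix x))); lra.
Qed.

Lemma dist_diff a x y : ix x <> ix y -> Rmet a x y = rr a x + rr a y.
Proof.
  intros E. unfold Rmet, rr. fold (sx x) (sx y) (ix x) (ix y).
  destruct (Nat.eq_dec (ix x) (ix y)); [contradiction|]. reflexivity.
Qed.

Lemma dist_root a p y : in_C a -> sx p = 0 -> Rmet a p y = rr a y /\ Rmet a y p = rr a y.
Proof.
  intros Ha H. destruct (sx_bounds p) as [_ H0]. specialize (H0 H).
  assert (rr a p = 0) by (unfold rr; rewrite H; ring).
  pose proof (rr_bounds a y Ha).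
  destruct (Nat.eq_dec (ix p) (ix y)).
  - rewrite !dist_same; auto. rewrite H1. split.
    + rewrite Rabs_minus_sym, Rabs_pos_eq; lra.
    + rewrite Rabs_pos_eq; lra.
  - rewrite !dist_diff; auto. lra.
Qed.

Lemma dist_le a x y : in_C a -> Rmet a x y <= rr a x + rr a y.
Proof.
  intros Ha. pose proof (rr_bounds a x Ha). pose proof (rr_bounds a y Ha).
  destruct (Nat.eq_dec (ix x) (ix y)).
  - rewrite dist_same; auto. unfold Rabs; destruct Rcase_abs; lra.
  - rewrite dist_diff; auto. lra.
Qed.

Definition char (d : Upsilon -> Upsilon -> R) (p : Upsilon) : Prop :=
  exists x y z, 0 < d x p /\ 0 < d y p /\ 0 < d z p /\
    d x y = d x p + d p y /\ d y z = d y p + d p z /\ d x z = d x p + d p z.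

Definition pt (i : nat) : Upsilon.
Proof. exists (1, i). right. simpl. lra. Defined.

Definition root0 : Upsilon.
Proof. exists (0, 0%nat). left. simpl. auto. Defined.

Lemma char_root a : in_C a -> char (Rmet a) root0.
Proof.
  intros Ha. assert (sx root0 = 0) by reflexivity.
  assert (forall i, 0 < rr a (pt i)) by (intros; apply rr_pos; auto; unfold sx; simpl; lra).
  exists (pt 0), (pt 1), (pt 2).
  rewrite !(proj2 (dist_root a root0 _ Ha H)).
  rewrite !(proj1 (dist_root a root0 _ Ha H)).
  rewrite !dist_diff; unfold ix; simpl; auto.
  repeat split; auto.
Qed.

Lemma notbetween a p x y : in_C a -> 0 < sx p ->
  0 < Rmet a x p -> 0 < Rmet a y p ->
  ((ix x = ix p /\ rr a x > rr a p) <-> (ix y = ix p /\ rr a y > rr a p)) ->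
  Rmet a x y < Rmet a x p + Rmet a p y.
Proof.
  intros Ha Hp Hx Hy Hside.
  pose proof (rr_pos a p Ha Hp).
  pose proof (rr_bounds a x Ha). pose proof (rr_bounds a y Ha).
  destruct (Nat.eq_dec (ix x) (ix p)) as [Ex|Ex];
  destruct (Nat.eq_dec (ix y) (ix p)) as [Ey|Ey].
  - rewrite (dist_same a x y), (dist_same a x p), (dist_same a p y) by (auto; congruence).
    rewrite (dist_same a x p) in Hx by auto. rewrite (dist_same a y p) in Hy by auto.
    destruct (Rlt_dec (rr a p) (rr a x)) as [Lx|Lx].
    + assert (rr a y > rr a p) by (apply Hside; auto).
      unfold Rabs; repeat destruct Rcase_abs; lra.
    + assert (~ rr a y > rr a p) by (intro; assert (ix x = ix p /\ rr a x > rr a p) by (apply Hside; auto); lra).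
      assert (rr a x <> rr a p) by (intro E; rewrite E in Hx; rewrite Rminus_diag, Rabs_R0 in Hx; lra).
      assert (rr a y <> rr a p) by (intro E; rewrite E in Hy; rewrite Rminus_diag, Rabs_R0 in Hy; lra).
      unfold Rabs; repeat destruct Rcase_abs; lra.
  - rewrite (dist_diff a x y) by (auto; congruence). rewrite dist_same by auto.
    rewrite (dist_diff a p y) by (auto; congruence). rewrite dist_same in Hx by auto.
    destruct (Rlt_dec (rr a p) (rr a x)) as [Lx|Lx].
    + assert (ix y = ix p /\ rr a y > rr a p) by (apply Hside; auto). tauto.
    + assert (rr a x <> rr a p) by (intro E; rewrite E in Hx; rewrite Rminus_diag, Rabs_R0 in Hx; lra).
      unfold Rabs; repeat destruct Rcase_abs; lra.
  - rewrite (dist_diff a x y) by (auto; congruence). rewrite (dist_diff a x p) by auto.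
    rewrite (dist_same a p y) by (auto; congruence). rewrite dist_same in Hy by auto.
    destruct (Rlt_dec (rr a p) (rr a y)) as [Ly|Ly].
    + assert (ix x = ix p /\ rr a x > rr a p) by (apply Hside; auto). tauto.
    + assert (rr a y <> rr a p) by (intro E; rewrite E in Hy; rewrite Rminus_diag, Rabs_R0 in Hy; lra).
      unfold Rabs; repeat destruct Rcase_abs; lra.
  - rewrite (dist_diff a x p) by auto. rewrite (dist_diff a p y) by (auto; congruence).
    pose proof (dist_le a x y Ha). lra.
Qed.

Lemma char_only a p : in_C a -> char (Rmet a) p -> sx p = 0.
Proof.
  intros Ha [x [y [z [Hx [Hy [Hz [E1 [E2 E3]]]]]]]].
  destruct (sx_bounds p) as [[H0 _] _].
  destruct (Req_dec (sx p) 0) as [|Hp]; auto. assert (0 < sx p) by lra.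
  exfalso.
  assert (Hsym : forall u v, Rmet a u v = Rmet a v u).
  { intros u v. destruct (Nat.eq_dec (ix u) (ix v)).
    - rewrite !dist_same; auto. apply Rabs_minus_sym.
    - rewrite !dist_diff; auto. lra. }
  set (A := fun q => ix q = ix p /\ rr a q > rr a p).
  assert (Hdec : forall q, A q \/ ~ A q).
  { intro q. unfold A. destruct (Nat.eq_dec (ix q) (ix p)); [|right; tauto].
    destruct (Rlt_dec (rr a p) (rr a q)); [left|right]; lra || tauto. }
  destruct (Hdec x), (Hdec y), (Hdec z);
  solve [ pose proof (notbetween a p x y Ha H Hx Hy ltac:(unfold A in *; tauto)); lra
        | pose proof (notbetween a p y z Ha H Hy Hz ltac:(unfold A in *; tauto)); lra
        | pose proof (notbetween a p x z Ha H Hx Hz ltac:(unfold A in *; tauto)); lra ].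
Qed.

Lemma iso_root a b c1 c2 h : in_C a -> in_C b -> 0 < c1 -> 0 < c2 ->
  (forall x y, c2 * Rmet b (h x) (h y) = c1 * Rmet a x y) ->
  sx (h root0) = 0.
Proof.
  intros Ha Hb H1 H2 Hh. apply (char_only b); auto.
  destruct (char_root a Ha) as [x [y [z [Hx [Hy [Hz [E1 [E2 E3]]]]]]]].
  assert (T : forall u v, Rmet b (h u) (h v) = c1 / c2 * Rmet a u v).
  { intros u v. apply (Rmult_eq_reg_l c2); [rewrite Hh; field; lra|lra]. }
  assert (0 < c1 / c2) by (apply Rdiv_lt_0_compat; auto).
  exists (h x), (h y), (h z). rewrite !T.
  rewrite E1, E2, E3. repeat split; try nra; ring.
Qed.

Lemma iso_le a b c1 c2 h : in_C a -> in_C b -> 0 < c1 -> 0 < c2 ->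
  (forall x y, c2 * Rmet b (h x) (h y) = c1 * Rmet a x y) -> c1 <= c2.
Proof.
  intros Ha Hb H1 H2 Hh. pose proof (iso_root a b c1 c2 h Ha Hb H1 H2 Hh) as R0.
  specialize (Hh (pt 0) root0).
  rewrite (proj2 (dist_root b _ _ Hb R0)) in Hh.
  rewrite (proj2 (dist_root a root0 _ Ha eq_refl)) in Hh.
  assert (E1 : rr a (pt 0) = 1) by (unfold rr, sx, ix; simpl; ring). rewrite E1 in Hh.
  pose proof (rr_bounds b (h (pt 0)) Hb). nra.
Qed.

Theorem proposition2p5 (a b : nat -> R) (K L : R) :
  in_C a -> in_C b -> 0 < K -> 0 < L ->
  isometric_scaled K (Rmet a) L (Rmet b) ->
  forall i : nat, (1 <= i)%nat -> a i = b i.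
Proof.
  intros Ha Hb HK HL [f [g [Hgf [Hfg Hf]]]] i Hi.
  assert (Hg : forall x y, K * Rmet a (g x) (g y) = L * Rmet b x y).
  { intros x y. rewrite <- Hf, !Hfg. reflexivity. }
  pose proof (iso_le a b K L f Ha Hb HK HL Hf).
  pose proof (iso_le b a L K g Hb Ha HL HK Hg).
  assert (K = L) by lra. subst L.
  assert (Hf' : forall x y, Rmet b (f x) (f y) = Rmet a x y).
  { intros. apply (Rmult_eq_reg_l K); auto. lra. }
  pose proof (iso_root a b K K f Ha Hb HK HK Hf) as Rf.
  set (x := pt i). set (y := f x). set (j := ix y). set (z := g (pt j)).
  assert (Ex : rr a x = a i).
  { unfold rr, x, sx, ix; simpl. destruct i; [lia|]. simpl. ring. }
  assert (D1 : rr a z = ext0 b j).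
  { rewrite <- (proj2 (dist_root a root0 z Ha eq_refl)).
    rewrite <- Hf'. unfold z. rewrite Hfg. rewrite (proj2 (dist_root b _ _ Hb Rf)).
    unfold rr, sx, ix; simpl. ring. }
  assert (D2 : rr a x = rr b y).
  { rewrite <- (proj2 (dist_root a root0 x Ha eq_refl)).
    rewrite <- Hf'. rewrite (proj2 (dist_root b _ _ Hb Rf)). reflexivity. }
  assert (Ey : rr b y = ext0 b j * sx y) by reflexivity.
  pose proof (inC_pos b j Hb). pose proof (sx_bounds y) as [[Sy0 Sy1] _].
  pose proof (inC_half a i Ha Hi). destruct (Ha i Hi).
  pose proof (half_pow_bounds (2*i)).
  assert (D3 : Rmet a z x = ext0 b j * (1 - sx y)).
  { rewrite <- Hf'. unfold z. rewrite Hfg. rewrite dist_same; auto.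
    assert (Ej : rr b (pt j) = ext0 b j) by (unfold rr, sx, ix; simpl; ring).
    rewrite Ej. fold y. rewrite Ey. rewrite Rabs_pos_eq; nra. }
  assert (Iz : ix z = i).
  { destruct (Nat.eq_dec (ix z) i) as [|Ne]; auto. exfalso.
    rewrite dist_diff in D3 by (unfold x, ix at 2; simpl; auto). nra. }
  assert (rr a z <= a i).
  { unfold rr. rewrite Iz. destruct i; [lia|]. simpl.
    destruct (sx_bounds z) as [[] _]. nra. }
  assert (E : a i = ext0 b j) by nra.
  destruct j as [|j].
  - simpl in E. lra.
  - simpl in E. assert (Hji : S j = i).
    { symmetry. apply (inC_inj a b); auto. lia. }
    rewrite Hji in E; exact E.
Qed.
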